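(* Let $A$ and $Z$ be $n\times n$ complex matrices with $A$ positive semidefinite and $Z$ positive definite with largest eigenvalue $a$ and smallest eigenvalue $b$. Then $${\rm Sing}(AZ) \prec_w \frac{a+b}{2\sqrt{ab}}\,{\rm Eig}(AZ),$$ i.e. for each $k=1,\dots,n$, the sum of the $k$ largest singular values of $AZ$ is at most $\frac{a+b}{2\sqrt{ab}}$ times the sum of the $k$ largest eigenvalues of $AZ$.
   Context: ${\rm Sing}(X)$ is the sequence of singular values of $X$ in decreasing order counted with multiplicity; ${\rm Eig}(X)$, for $X$ with only real eigenvalues (as is $AZ$ here), is the sequence of its eigenvalues in decreasing order counted with multiplicity. For real sequences $\{a_j\}_{j=1}^n,\{b_j\}_{j=1}^n$ arranged in decreasing order, $\{a_j\}\prec_w\{b_j\}$ means $\sum_{j=1}^k a_j\le\sum_{j=1}^k b_j$ for $k=1,\dots,n$. *)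

(* Defs.v *)
From HB Require Import structures.
From mathcomp Require Import all_boot all_order all_algebra.
From mathcomp Require Import complex.
Set Implicit Arguments. Unset Strict Implicit. Unset Printing Implicit Defensive.
Import Order.TTheory GRing.Theory Num.Theory.
Local Open Scope ring_scope.
Local Open Scope complex_scope.

(* Complex numbers are modelled as R[i] = complex R for a real closed field R
   (for R the real numbers this is C). *)

Definition adjmx (R : rcfType) m n (M : 'M[R[i]]_(m, n)) : 'M[R[i]]_(n, m) :=
  (map_mx Num.conj M)^T.

Definition psdmx (R : rcfType) n (A : 'M[R[i]]_n) : Prop :=
  adjmx A = A /\ forall v : 'rV[R[i]]_n, 0 <= (v *m A *m adjmx v) 0 0.

Definition pdmx (R : rcfType) n (A : 'M[R[i]]_n) : Prop :=
  adjmx A = A /\ forall v : 'rV[R[i]]_n, v != 0 -> 0 < (v *m A *m adjmx v) 0 0.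

(* s = Eig(M): the (necessarily real) eigenvalues of M, counted with
   multiplicity (as roots of the characteristic polynomial), in decreasing order *)
Definition is_Eig (R : rcfType) n (M : 'M[R[i]]_n) (s : seq R) : Prop :=
  sorted (>=%R) s /\ char_poly M = \prod_(x <- s) ('X - (x%:C)%:P).

(* s = Sing(M): the singular values of M (nonnegative square roots of the
   eigenvalues of M^* M), counted with multiplicity, in decreasing order *)
Definition is_Sing (R : rcfType) n (M : 'M[R[i]]_n) (s : seq R) : Prop :=
  sorted (>=%R) s /\ all (fun x => 0 <= x) s /\
  char_poly (adjmx M *m M) = \prod_(x <- s) ('X - ((x ^+ 2)%:C)%:P).

(* Main.v *)
Require Import Defs.
From HB Require Import structures.
From mathcomp Require Import all_boot all_order all_algebra.
From mathcomp Require Import complex ring lra.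
From mathcomp Require Import perm.
Set Implicit Arguments. Unset Strict Implicit. Unset Printing Implicit Defensive.
Import Order.TTheory GRing.Theory Num.Theory.
Local Open Scope ring_scope.
Section S.
Variable R : rcfType.
Local Notation C := (R[i]).
Lemma adjmxE m n (M : 'M[C]_(m,n)) : adjmx M = map_mx Num.conj (M ^T).
Proof. by rewrite /adjmx map_trmx. Qed.
Lemma adjU_diag_U n (U : 'M[C]_n) (d : 'I_n -> C) :
  adjmx U *m diag_mx (\row_l d l) *m U = \sum_l d l *: (adjmx (row l U) *m row l U).
Proof.
apply/matrixP => i j; rewrite mul_mx_diag !mxE summxE; apply: eq_bigr => l _.
rewrite !mxE big_ord1 !mxE; ring.
Qed.
Lemma char_poly_conj n (S Si P : 'M[C]_n) : Si *m S = 1%:M ->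
  char_poly (Si *m P *m S) = char_poly P.
Proof.
move=> SiS; rewrite /char_poly /char_poly_mx.
have -> : 'X%:M - map_mx polyC (Si *m P *m S) =
   map_mx polyC Si *m ('X%:M - map_mx polyC P) *m map_mx polyC S.
  rewrite mulmxBr mulmxBl !map_mxM; congr (_ - _).
  by rewrite mul_mx_scalar -scalemxAl -map_mxM SiS map_mx1 scalemx1.
rewrite !det_mulmx mulrC mulrA -det_mulmx -map_mxM.
by rewrite (_ : S *m Si = 1%:M) ?map_mx1 ?det1 ?mul1r //; apply: mulmx1C.
Qed.

Lemma spec_base n (H : 'M[C]_n) : adjmx H = H ->
  exists (U : 'M[C]_n) (d : 'I_n -> R),
   [/\ U *m adjmx U = 1%:M, adjmx U *m U = 1%:M,
       H = \sum_l (d l)%:C%C *: (adjmx (row l U) *m row l U) &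
       char_poly H = \prod_l ('X - ((d l)%:C%C)%:P)].
Proof.
move=> hH.
have herm : H \is hermsymmx.
  by rewrite is_hermitianmxE expr0 scale1r -adjmxE hH.
have /hermitian_normalmx /orthomx_spectralP E := herm.
have Uu := spectral_unitarymx H.
have /mxOverP rl := hermitian_spectral_diag_real herm.
set U := spectralmx H in E Uu.
set sp := spectral_diag H in E rl.
have UU : U *m adjmx U = 1%:M by rewrite adjmxE; move/unitarymxP: Uu.
have UU' : adjmx U *m U = 1%:M by apply: mulmx1C.
have Ui : invmx U = adjmx U by rewrite invmx_unitary // adjmxE.
exists U, (fun l => complex.Re (sp 0 l)).
have spE : sp = \row_l (complex.Re (sp 0 l))%:C%C.
  by apply/rowP => l; rewrite mxE RRe_real // rl.
have HE : H = adjmx U *m diag_mx (\row_l (complex.Re (sp 0 l))%:C%C) *m U.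
  by rewrite -spE -Ui.
split => //; first by rewrite {1}HE adjU_diag_U.
rewrite HE char_poly_conj // char_poly_trig ?diag_mx_is_trig //.
by apply: eq_bigr => l _; rewrite !mxE eqxx.
Qed.
Definition dot n (u v : 'rV[C]_n) : C := (u *m adjmx v) 0 0.
Definition orthon n (f : 'I_n -> 'rV[C]_n) := forall i j, dot (f i) (f j) = (i == j)%:R.
Definition complete n (f : 'I_n -> 'rV[C]_n) := \sum_i adjmx (f i) *m f i = 1%:M.
Definition decomp n (H : 'M[C]_n) (w : 'I_n -> R) (f : 'I_n -> 'rV[C]_n) :=
  H = \sum_i (w i)%:C%C *: (adjmx (f i) *m f i).

Lemma rows_orthon n (U : 'M[C]_n) : U *m adjmx U = 1%:M -> orthon (fun l => row l U).
Proof.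
move=> UU i j; rewrite /dot; have := congr1 (fun M : 'M[C]_n => M i j) UU; rewrite !mxE => <-.
by apply: eq_bigr => k _; rewrite !mxE.
Qed.

Lemma rows_complete n (U : 'M[C]_n) : adjmx U *m U = 1%:M -> complete (fun l => row l U).
Proof.
move=> UU; rewrite /complete -UU; apply/matrixP => i j; rewrite summxE !mxE.
by apply: eq_bigr => k _; rewrite !mxE big_ord1 !mxE.
Qed.

Lemma spec_any n (H : 'M[C]_n) : adjmx H = H ->
  exists f w, [/\ orthon f, complete f & decomp H w f].
Proof.
move=> /spec_base [U [d [UU UU' HE _]]]; exists (fun l => row l U), d.
by split; [apply: rows_orthon | apply: rows_complete | ].
Qed.

Lemma spec_sorted n (H : 'M[C]_n) (s : seq R) : adjmx H = H ->
  char_poly H = \prod_(x <- s) ('X - (x%:C%C)%:P) ->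
  size s = n /\ exists f, [/\ orthon f, complete f & decomp H (fun i => s`_i) f].
Proof.
move=> /spec_base [U [d [UU UU' HE cE]]] cE'.
have pe : perm_eq [seq x%:C%C | x <- s] [tuple (d l)%:C%C | l < n].
  apply: prod_XsubC_eq; rewrite big_map -cE' cE big_map.
  by rewrite /= big_enum.
have sz : size s = n by rewrite -(size_map (fun x => x%:C%C)) (perm_size pe) size_tuple.
split => //.
have [p pE] := tuple_permP pe.
have sE : forall i : 'I_n, s`_i = d (p i).
  move=> i; apply: (@complexI R).
  have := congr1 (fun t => nth 0 t i) pE.
  rewrite (nth_map 0) ?sz ?ltn_ord // => ->.
  by rewrite /= (nth_map i) ?size_enum_ord ?ltn_ord // nth_ord_enum tnth_map tnth_ord_tuple.
exists (fun i => row (p i) U); split.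
- move=> i j; have := rows_orthon UU (p i) (p j); rewrite /= (inj_eq (@perm_inj _ p)) //.
- rewrite /complete -(rows_complete UU').
  by rewrite [RHS](reindex_inj (@perm_inj _ p)).
- rewrite /decomp HE [LHS](reindex_inj (@perm_inj _ p)) /=.
  by apply: eq_bigr => i _; rewrite sE.
Qed.
Lemma adjmxM m n p (A : 'M[C]_(m,n)) (B : 'M[C]_(n,p)) : adjmx (A *m B) = adjmx B *m adjmx A.
Proof. by rewrite /adjmx map_mxM trmx_mul. Qed.
Lemma adjmxK m n (A : 'M[C]_(m,n)) : adjmx (adjmx A) = A.
Proof. by apply/matrixP=> i j; rewrite !mxE conjCK. Qed.
Lemma adjmxD m n (A B : 'M[C]_(m,n)) : adjmx (A + B) = adjmx A + adjmx B.
Proof. by apply/matrixP=> i j; rewrite !mxE rmorphD. Qed.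
Lemma adjmxN m n (A : 'M[C]_(m,n)) : adjmx (- A) = - adjmx A.
Proof. by apply/matrixP=> i j; rewrite !mxE rmorphN. Qed.
Lemma adjmxB m n (A B : 'M[C]_(m,n)) : adjmx (A - B) = adjmx A - adjmx B.
Proof. by rewrite adjmxD adjmxN. Qed.
Lemma adjmxZ m n (c : C) (A : 'M[C]_(m,n)) : adjmx (c *: A) = c^* *: adjmx A.
Proof. by apply/matrixP=> i j; rewrite !mxE rmorphM. Qed.
Lemma adjmx_sum m n I (r : seq I) (P : pred I) (F : I -> 'M[C]_(m,n)) :
  adjmx (\sum_(i <- r | P i) F i) = \sum_(i <- r | P i) adjmx (F i).
Proof.
apply/matrixP=> i j; rewrite !mxE summxE rmorph_sum summxE; apply: eq_bigr => k _.
by rewrite !mxE.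
Qed.
Lemma adjmx1 n : adjmx (1%:M : 'M[C]_n) = 1%:M.
Proof. by apply/matrixP=> i j; rewrite !mxE conjC_nat eq_sym. Qed.
Lemma adjmx0 m n : adjmx (0 : 'M[C]_(m,n)) = 0.
Proof. by apply/matrixP=> i j; rewrite !mxE rmorph0. Qed.

Lemma dotE n (u v : 'rV[C]_n) : dot u v = dotmx u v.
Proof. by rewrite dotmxE /dot adjmxE. Qed.
Lemma CS n (u v : 'rV[C]_n) : `|dot u v| ^+ 2 <= dot u u * dot v v.
Proof. rewrite !dotE; exact: (CauchySchwarz (@dotmx C n) u v). Qed.
Lemma dot_ge0 n (u : 'rV[C]_n) : 0 <= dot u u.
Proof. by rewrite dotE dnorm_ge0. Qed.
Lemma dot_gt0 n (u : 'rV[C]_n) : u != 0 -> 0 < dot u u.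
Proof. by move=> u0; rewrite dotE lt_def dnorm_ge0 dnorm_eq0 u0. Qed.

Lemma dot_sumE n (u v : 'rV[C]_n) : dot u v = \sum_k u 0 k * (v 0 k)^*.
Proof. by rewrite /dot mxE; apply: eq_bigr => k _; rewrite !mxE. Qed.
Lemma dotC n (u v : 'rV[C]_n) : dot v u = (dot u v)^*.
Proof.
rewrite !dot_sumE rmorph_sum; apply: eq_bigr => k _.
by rewrite rmorphM /= conjCK mulrC.
Qed.
Lemma dotDl n (u u' v : 'rV[C]_n) : dot (u + u') v = dot u v + dot u' v.
Proof. by rewrite /dot mulmxDl mxE. Qed.
Lemma dotZl n a (u v : 'rV[C]_n) : dot (a *: u) v = a * dot u v.
Proof. by rewrite /dot -scalemxAl mxE. Qed.
Lemma dotNl n (u v : 'rV[C]_n) : dot (- u) v = - dot u v.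
Proof. by rewrite /dot mulNmx mxE. Qed.
Lemma dotBl n (u u' v : 'rV[C]_n) : dot (u - u') v = dot u v - dot u' v.
Proof. by rewrite dotDl dotNl. Qed.
Lemma dot_suml n I (r : seq I) (P : pred I) (F : I -> 'rV[C]_n) v :
  dot (\sum_(i <- r | P i) F i) v = \sum_(i <- r | P i) dot (F i) v.
Proof. by rewrite /dot mulmx_suml summxE. Qed.
Lemma dotDr n (u v v' : 'rV[C]_n) : dot u (v + v') = dot u v + dot u v'.
Proof. by rewrite dotC dotDl rmorphD /= -!dotC. Qed.
Lemma dotBr n (u v v' : 'rV[C]_n) : dot u (v - v') = dot u v - dot u v'.
Proof. by rewrite dotC dotBl rmorphB /= -!dotC. Qed.
Lemma dotZr n a (u v : 'rV[C]_n) : dot u (a *: v) = a^* * dot u v.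
Proof. by rewrite dotC dotZl rmorphM /= -!dotC. Qed.
Lemma dot_sumr n I (r : seq I) (P : pred I) (F : I -> 'rV[C]_n) u :
  dot u (\sum_(i <- r | P i) F i) = \sum_(i <- r | P i) dot u (F i).
Proof. by rewrite dotC dot_suml rmorph_sum /=; apply: eq_bigr => i _; rewrite -dotC. Qed.
Lemma dot0r n (u : 'rV[C]_n) : dot u 0 = 0.
Proof. by rewrite /dot adjmx0 mulmx0 mxE. Qed.
Lemma dot0l n (u : 'rV[C]_n) : dot 0 u = 0.
Proof. by rewrite /dot mul0mx mxE. Qed.

Lemma rv_adj_rv n p (u v : 'rV[C]_n) (w : 'M[C]_(1,p)) : u *m adjmx v *m w = dot u v *: w.
Proof. by rewrite [u *m _]mx11_scalar mul_scalar_mx. Qed.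

Lemma sum_delta n (F : 'I_n -> C) l : \sum_l' F l' * (l == l')%:R = F l.
Proof.
rewrite (bigD1 l) //= eqxx mulr1 big1 ?addr0 // => l' /negbTE.
by rewrite eq_sym => ->; rewrite mulr0.
Qed.

Definition Dm n (e : 'I_n -> 'rV[C]_n) (a : 'I_n -> C) : 'M[C]_n :=
  \sum_l a l *: (adjmx (e l) *m e l).

Lemma rv_Dm n (e : 'I_n -> 'rV[C]_n) a (x : 'rV[C]_n) :
  x *m Dm e a = \sum_l (a l * dot x (e l)) *: e l.
Proof.
rewrite /Dm mulmx_sumr; apply: eq_bigr => l _.
by rewrite -scalemxAr mulmxA rv_adj_rv scalerA.
Qed.

Lemma dot_orth_sum n (e : 'I_n -> 'rV[C]_n) (c c' : 'I_n -> C) : orthon e ->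
  dot (\sum_l c l *: e l) (\sum_l c' l *: e l) = \sum_l c l * (c' l)^*.
Proof.
move=> oe; rewrite dot_suml; apply: eq_bigr => l _.
rewrite dotZl dot_sumr.
under eq_bigr => l' _ do rewrite dotZr oe.
by rewrite sum_delta.
Qed.

Lemma Dm_form n (e : 'I_n -> 'rV[C]_n) a a' (x z : 'rV[C]_n) : orthon e ->
  dot (x *m Dm e a) (z *m Dm e a') =
  \sum_l a l * (a' l)^* * (dot x (e l) * (dot z (e l))^*).
Proof.
move=> oe; rewrite !rv_Dm dot_orth_sum //; apply: eq_bigr => l _.
rewrite rmorphM; ring.
Qed.

Lemma Dm1 n (e : 'I_n -> 'rV[C]_n) : complete e -> Dm e (fun _ => 1) = 1%:M.
Proof. by move=> ce; rewrite /Dm -ce; apply: eq_bigr => l _; rewrite scale1r. Qed.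

Lemma dot_coord n (e : 'I_n -> 'rV[C]_n) (x z : 'rV[C]_n) : orthon e -> complete e ->
  dot x z = \sum_l dot x (e l) * (dot z (e l))^*.
Proof.
move=> oe ce; have h : forall y : 'rV[C]_n, y = y *m Dm e (fun _ => 1).
  by move=> y; rewrite Dm1 // mulmx1.
rewrite {1}(h x) {1}(h z) Dm_form //; apply: eq_bigr => l _.
by rewrite conjC1 !mul1r.
Qed.

Lemma Dm_mul n (e : 'I_n -> 'rV[C]_n) a a' : orthon e ->
  Dm e a *m Dm e a' = Dm e (fun l => a l * a' l).
Proof.
move=> oe; rewrite {1}/Dm mulmx_suml; apply: eq_bigr => l _.
rewrite -scalemxAl -mulmxA rv_Dm.
under eq_bigr => l' _ do rewrite oe.
rewrite (bigD1 l) //= eqxx mulr1 big1 ?addr0; last first.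
  by move=> l' /negbTE; rewrite eq_sym => ->; rewrite mulr0 scale0r.
by rewrite -scalemxAr scalerA.
Qed.

Lemma Dm_adj n (e : 'I_n -> 'rV[C]_n) a : adjmx (Dm e a) = Dm e (fun l => (a l)^*).
Proof.
rewrite /Dm adjmx_sum; apply: eq_bigr => l _.
by rewrite adjmxZ adjmxM adjmxK.
Qed.
Lemma sq_le (u v : R) : 0 <= v -> u ^+ 2 <= v ^+ 2 -> u <= v.
Proof. move=> v0 h; nra. Qed.

Lemma wiel_norm (a b al ga B : R) : 0 < b -> b <= a ->
  b <= al -> al <= a -> b <= ga -> ga <= a -> 0 <= B ->
  B <= (al - b) * (ga - b) -> B <= (a - al) * (a - ga) ->
  B * (a + b) ^+ 2 <= (a - b) ^+ 2 * (al * ga).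
Proof.
move=> b0 ba h1 h2 h3 h4 B0 H2 H3.
set s := al + ga.
have key : ((al * ga) - B) * (a + b) ^+ 2 >= a * b * s ^+ 2.
  have [sle|sge] := lerP s (a + b).
    have p1 : 0 <= b * ((a + b - s) * (a * s - b * (a + b))).
      apply: mulr_ge0; first lra.
      apply: mulr_ge0; first lra. rewrite /s; nra.
    have p2 : (b * s - b ^+ 2) * (a + b) ^+ 2 <= (al * ga - B) * (a + b) ^+ 2.
      apply: ler_wpM2r; first by rewrite sqr_ge0.
      rewrite /s; nra.
    have e : (b * s - b ^+ 2) * (a + b) ^+ 2 - a * b * s ^+ 2 =
             b * ((a + b - s) * (a * s - b * (a + b))) by ring.
    lra.
  have p1 : 0 <= a * ((s - (a + b)) * (a * (a + b) - b * s)).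
    apply: mulr_ge0; first lra.
    apply: mulr_ge0; first lra. rewrite /s; nra.
  have p2 : (a * s - a ^+ 2) * (a + b) ^+ 2 <= (al * ga - B) * (a + b) ^+ 2.
    apply: ler_wpM2r; first by rewrite sqr_ge0.
    rewrite /s; nra.
  have e : (a * s - a ^+ 2) * (a + b) ^+ 2 - a * b * s ^+ 2 =
           a * ((s - (a + b)) * (a * (a + b) - b * s)) by ring.
  lra.
have q : 4%:R * (al * ga) <= s ^+ 2.
  have e : s ^+ 2 - 4%:R * (al * ga) = (al - ga) ^+ 2 by rewrite /s; ring.
  by rewrite -subr_ge0 e sqr_ge0.
have q2 : a * b * (4%:R * (al * ga)) <= a * b * s ^+ 2.
  by apply: ler_wpM2l q; apply: mulr_ge0; lra.
have e : (a - b) ^+ 2 = (a + b) ^+ 2 - 4%:R * a * b by ring.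
rewrite e; nra.
Qed.
Lemma wiel_hom (a b al ga nq nr B : R) : 0 < b -> b <= a -> 0 <= nq -> 0 <= nr ->
  b * nq <= al -> al <= a * nq -> b * nr <= ga -> ga <= a * nr -> 0 <= B ->
  B <= (al - b * nq) * (ga - b * nr) -> B <= (a * nq - al) * (a * nr - ga) ->
  B * (a + b) ^+ 2 <= (a - b) ^+ 2 * (al * ga).
Proof.
move=> b0 ba q0 r0 h1 h2 h3 h4 B0 H2 H3.
have [q00|qn] := eqVneq nq 0.
  have al0 : al = 0 by rewrite q00 in h1 h2; lra.
  have : B <= 0 by move: H2; rewrite al0 q00 !mulr0 subr0 mul0r.
  move=> Bl; have -> : B = 0 by lra.
  by rewrite mul0r al0 mul0r mulr0.
have [r00|rn] := eqVneq nr 0.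
  have ga0 : ga = 0 by rewrite r00 in h3 h4; lra.
  have : B <= 0 by move: H2; rewrite ga0 r00 !mulr0 subr0 mulr0.
  move=> Bl; have -> : B = 0 by lra.
  by rewrite mul0r ga0 !mulr0.
have qp : 0 < nq by rewrite lt_def qn.
have rp : 0 < nr by rewrite lt_def rn.
have qr : 0 < nq * nr by apply: mulr_gt0.
have e1 : (al / nq - b) * (ga / nr - b) = (al - b * nq) * (ga - b * nr) / (nq * nr).
  by field; rewrite qn rn.
have e2 : (a - al / nq) * (a - ga / nr) = (a * nq - al) * (a * nr - ga) / (nq * nr).
  by field; rewrite qn rn.
have W := @wiel_norm a b (al / nq) (ga / nr) (B / (nq * nr)) b0 ba.
rewrite e1 e2 in W.
have iq : 0 <= (nq * nr)^-1 by rewrite invr_ge0 ltW.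
have W' := W ltac:(rewrite ler_pdivlMr //; lra) ltac:(rewrite ler_pdivrMr //; lra)
   ltac:(rewrite ler_pdivlMr //; lra) ltac:(rewrite ler_pdivrMr //; lra)
   ltac:(by apply: divr_ge0; [|apply: ltW])
   ltac:(by apply: ler_wpM2r) ltac:(by apply: ler_wpM2r).
have e3 : B / (nq * nr) * (a + b) ^+ 2 = (B * (a + b) ^+ 2) / (nq * nr) by field; rewrite qn rn.
have e4 : (a - b) ^+ 2 * (al / nq * (ga / nr)) = ((a - b) ^+ 2 * (al * ga)) / (nq * nr)
  by field; rewrite qn rn.
by move: W'; rewrite e3 e4 ler_pM2r ?invr_gt0.
Qed.

Lemma wiel_finish (a b al ga nq nr x y : R) : 0 < b -> b <= a -> 0 <= nq -> 0 <= nr ->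
  b * nq <= al -> al <= a * nq -> b * nr <= ga -> ga <= a * nr ->
  x ^+ 2 + y ^+ 2 <= (al - b * nq) * (ga - b * nr) ->
  x ^+ 2 + y ^+ 2 <= (a * nq - al) * (a * nr - ga) ->
  4%:R * a * b * al <= (a + b) ^+ 2 * (al + ga + 2%:R * x).
Proof.
move=> b0 ba q0 r0 h1 h2 h3 h4 H2 H3.
have B0 : 0 <= x ^+ 2 + y ^+ 2 by rewrite addr_ge0 ?sqr_ge0.
have W := wiel_hom b0 ba q0 r0 h1 h2 h3 h4 B0 H2 H3.
set K := (a + b) ^+ 2 in W *; set L := (a - b) ^+ 2 in W.
have K0 : 0 <= K by rewrite sqr_ge0.
have L0 : 0 <= L by rewrite sqr_ge0.
have al0 : 0 <= al by nra.
have ga0 : 0 <= ga by nra.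
have eK : 4%:R * a * b = K - L by rewrite /K /L; ring.
rewrite eK.
suff : - (2%:R * K * x) <= L * al + K * ga by lra.
apply: sq_le; first by apply: addr_ge0; apply: mulr_ge0.
have s1 : (- (2%:R * K * x)) ^+ 2 <= 4%:R * K * (K * (x ^+ 2 + y ^+ 2)).
  have : (- (2%:R * K * x)) ^+ 2 = 4%:R * K * (K * x ^+ 2) by ring.
  move=> ->; apply: ler_wpM2l; first by apply: mulr_ge0.
  apply: ler_wpM2l => //; have := sqr_ge0 y; lra.
have s2 : 4%:R * K * (K * (x ^+ 2 + y ^+ 2)) <= 4%:R * K * (L * (al * ga)).
  apply: ler_wpM2l; first by apply: mulr_ge0.
  by rewrite mulrC.
have s3 : 4%:R * K * (L * (al * ga)) <= (L * al + K * ga) ^+ 2.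
  have e : (L * al + K * ga) ^+ 2 - 4%:R * K * (L * (al * ga)) = (L * al - K * ga) ^+ 2 by ring.
  by rewrite -subr_ge0 e sqr_ge0.
lra.
Qed.
Lemma kanto n (w d : 'I_n -> R) (a b : R) : 0 < b -> b <= a -> (forall l, 0 <= w l) ->
  (forall l, b <= d l) -> (forall l, d l <= a) ->
  4%:R * a * b * ((\sum_l d l * w l) * (\sum_l w l / d l)) <= (a + b) ^+ 2 * (\sum_l w l) ^+ 2.
Proof.
move=> b0 ba w0 db da.
have t : forall l, d l * w l + a * b * (w l / d l) <= (a + b) * w l.
  move=> l; have dl : 0 < d l by apply: lt_le_trans (db l).
  have e : d l * w l + a * b * (w l / d l) - (a + b) * w l =
           - (w l * ((a - d l) * (d l - b)) / d l).
    by field; rewrite gt_eqF.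
  rewrite -subr_ge0 -opprB e opprK.
  apply: divr_ge0; last exact: ltW.
  apply: mulr_ge0 => //; apply: mulr_ge0; rewrite subr_ge0 //.
set X := \sum_l d l * w l; set Y := \sum_l w l / d l; set W := \sum_l w l.
have XY : X + a * b * Y <= (a + b) * W.
  rewrite /X /Y /W mulr_sumr mulr_sumr -big_split /=; apply: ler_sum => l _; exact: t.
have X0 : 0 <= X.
  apply: sumr_ge0 => l _; apply: mulr_ge0 => //; apply: le_trans (db l); exact: ltW.
have Y0 : 0 <= Y.
  apply: sumr_ge0 => l _; apply: divr_ge0 => //; apply: le_trans (db l); exact: ltW.
have ab0 : 0 <= a * b by apply: mulr_ge0; lra.
have s1 : 4%:R * a * b * (X * Y) <= (X + a * b * Y) ^+ 2.
  have e : (X + a * b * Y) ^+ 2 - 4%:R * a * b * (X * Y) = (X - a * b * Y) ^+ 2 by ring.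
  by rewrite -subr_ge0 e sqr_ge0.
have s2 : (X + a * b * Y) ^+ 2 <= ((a + b) * W) ^+ 2.
  have h0 : 0 <= X + a * b * Y by apply: addr_ge0 => //; apply: mulr_ge0.
  nra.
by rewrite -exprMn; lra.
Qed.
Lemma conjR (x : R) : Num.conj (x%:C%C) = x%:C%C.
Proof. exact: conjc_real. Qed.
Lemma ge0_realE (z : C) : 0 <= z -> z = (complex.Re z)%:C%C.
Proof. by case: z => x y; rewrite lecE /= => /andP [/eqP -> _]. Qed.
Lemma mulJ (z : C) : z * Num.conj z = ((complex.Re z) ^+ 2 + (complex.Im z) ^+ 2)%:C%C.
Proof. by rewrite add_Re2_Im2 -sqr_normc. Qed.
Lemma mulJ_ge0 (z : C) : 0 <= z * Num.conj z.
Proof. by rewrite mulJ lecR addr_ge0 ?sqr_ge0. Qed.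

Section Main.
Variables (n : nat) (e : 'I_n -> 'rV[C]_n).
Hypotheses (oe : orthon e) (ce : complete e).

Definition Sq (w : 'I_n -> R) := Dm e (fun l => (Num.sqrt (w l))%:C%C).
Definition gam (x : 'rV[C]_n) l := dot x (e l) * Num.conj (dot x (e l)).
Definition gamc (x z : 'rV[C]_n) l := dot x (e l) * Num.conj (dot z (e l)).

Lemma Sq_form (w : 'I_n -> R) x z : (forall l, 0 <= w l) ->
  dot (x *m Sq w) (z *m Sq w) = \sum_l (w l)%:C%C * gamc x z l.
Proof.
move=> w0; rewrite Dm_form //; apply: eq_bigr => l _.
by rewrite conjR -rmorphM /= -expr2 sqr_sqrtr.
Qed.

Lemma Sq_adj w : adjmx (Sq w) = Sq w.
Proof. by rewrite /Sq Dm_adj /Dm; apply: eq_bigr => l _; rewrite conjR. Qed.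

Lemma Sq_mul w w' : Sq w *m Sq w' = Dm e (fun l => (Num.sqrt (w l) * Num.sqrt (w' l))%:C%C).
Proof. by rewrite Dm_mul // /Dm; apply: eq_bigr => l _; rewrite rmorphM. Qed.

Lemma dot_gamc x z : dot x z = \sum_l gamc x z l.
Proof. exact: dot_coord. Qed.

Variables (a b : R) (d : 'I_n -> R).
Hypotheses (b0 : 0 < b) (ba : b <= a) (db : forall l, b <= d l) (da : forall l, d l <= a).

Lemma d0 l : 0 < d l. Proof. exact: lt_le_trans b0 (db l). Qed.

Lemma gamc_real x l : gamc x x l = (complex.Re (gamc x x l))%:C%C.
Proof. by apply: ge0_realE; apply: mulJ_ge0. Qed.
Lemma gamc_ge0 x l : 0 <= complex.Re (gamc x x l).
Proof. by rewrite -lecR -gamc_real mulJ_ge0. Qed.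

Lemma KC (p : 'rV[C]_n) : dot p p = 1 ->
  (4%:R * a * b)%:C%C * (dot (p *m Sq d) (p *m Sq d) *
     dot (p *m Sq (fun l => (d l)^-1)) (p *m Sq (fun l => (d l)^-1))) <= ((a + b) ^+ 2)%:C%C.
Proof.
move=> pp; set W := fun l => complex.Re (gamc p p l).
have W1 : \sum_l W l = 1.
  apply: (@complexI R); rewrite rmorph_sum rmorph1 /= -pp dot_gamc //.
  by apply: eq_bigr => l _; rewrite -gamc_real.
rewrite !Sq_form; last 2 first.
- by move=> l; rewrite invr_ge0 ltW ?d0.
- by move=> l; rewrite ltW ?d0.
have -> : \sum_l (d l)%:C%C * gamc p p l = (\sum_l d l * W l)%:C%C.
  by rewrite rmorph_sum; apply: eq_bigr => l _; rewrite rmorphM /= -gamc_real.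
have -> : \sum_l ((d l)^-1)%:C%C * gamc p p l = (\sum_l W l / d l)%:C%C.
  by rewrite rmorph_sum; apply: eq_bigr => l _; rewrite rmorphM /= -gamc_real mulrC.
rewrite -!rmorphM /= lecR.
have := kanto b0 ba (fun l => gamc_ge0 p l) db da.
by rewrite -/W W1 expr1n mulr1.
Qed.

Lemma addJ (z : C) : z + Num.conj z = (2%:R * complex.Re z)%:C%C.
Proof. by case: z => x y; apply/eqP; rewrite eq_complex /=; apply/andP; split; apply/eqP; ring. Qed.

Lemma sum_gamc_split (w : 'I_n -> R) (c : R) x z :
  \sum_l (w l - c)%:C%C * gamc x z l = \sum_l (w l)%:C%C * gamc x z l - c%:C%C * \sum_l gamc x z l.
Proof.
rewrite mulr_sumr -sumrB; apply: eq_bigr => l _; by rewrite rmorphB mulrBl.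
Qed.
Lemma sum_gamc_split' (w : 'I_n -> R) (c : R) x z :
  \sum_l (c - w l)%:C%C * gamc x z l = c%:C%C * \sum_l gamc x z l - \sum_l (w l)%:C%C * gamc x z l.
Proof.
rewrite mulr_sumr -sumrB; apply: eq_bigr => l _; by rewrite rmorphB mulrBl.
Qed.

Lemma WC (p : 'I_n -> 'rV[C]_n) (P : pred 'I_n) (y : 'rV[C]_n) :
  orthon p -> complete p ->
  (4%:R * a * b)%:C%C * dot (y *m Dm p (fun j => (P j)%:R) *m Sq d) (y *m Dm p (fun j => (P j)%:R) *m Sq d) <=
  ((a + b) ^+ 2)%:C%C * dot (y *m Sq d) (y *m Sq d).
Proof.
move=> op cp; set Q := Dm p _; set q := y *m Q; set r := y - q.
have qr0 : dot q r = 0.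
  have h : y = y *m Dm p (fun _ => 1) by rewrite Dm1 // mulmx1.
  rewrite /r dotBr {1}h /q /Q !Dm_form //; rewrite -sumrB big1 // => j _.
  by case: (P j); rewrite ?conjC1 ?conjC0 /= ?subrr // !mul0r subrr.
have yqr : y = q + r by rewrite /r addrC subrK.
have d0' : forall l, 0 <= d l by move=> l; rewrite ltW ?d0.
have dbp : forall l, 0 <= d l - b by move=> l; rewrite subr_ge0.
have dap : forall l, 0 <= a - d l by move=> l; rewrite subr_ge0.
set al := dot (q *m Sq d) (q *m Sq d).
set ga := dot (r *m Sq d) (r *m Sq d).
set be := dot (q *m Sq d) (r *m Sq d).
set nq := dot q q. set nr := dot r r.
have ealr : al = (complex.Re al)%:C%C by apply: ge0_realE; apply: dot_ge0.
have egar : ga = (complex.Re ga)%:C%C by apply: ge0_realE; apply: dot_ge0.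
have enqr : nq = (complex.Re nq)%:C%C by apply: ge0_realE; apply: dot_ge0.
have enrr : nr = (complex.Re nr)%:C%C by apply: ge0_realE; apply: dot_ge0.
have qrs : \sum_l gamc q r l = 0 by rewrite -dot_gamc.
have T1qq : dot (q *m Sq (fun l => d l - b)) (q *m Sq (fun l => d l - b)) = al - b%:C%C * nq.
  by rewrite (@Sq_form _ _ _ dbp) sum_gamc_split -(@Sq_form d q q d0') -(dot_gamc q q).
have T1rr : dot (r *m Sq (fun l => d l - b)) (r *m Sq (fun l => d l - b)) = ga - b%:C%C * nr.
  by rewrite (@Sq_form _ _ _ dbp) sum_gamc_split -(@Sq_form d r r d0') -(dot_gamc r r).
have T1qr : dot (q *m Sq (fun l => d l - b)) (r *m Sq (fun l => d l - b)) = be.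
  by rewrite (@Sq_form _ _ _ dbp) sum_gamc_split qrs mulr0 subr0 -(@Sq_form d q r d0').
have T2qq : dot (q *m Sq (fun l => a - d l)) (q *m Sq (fun l => a - d l)) = a%:C%C * nq - al.
  by rewrite (@Sq_form _ _ _ dap) sum_gamc_split' -(@Sq_form d q q d0') -(dot_gamc q q).
have T2rr : dot (r *m Sq (fun l => a - d l)) (r *m Sq (fun l => a - d l)) = a%:C%C * nr - ga.
  by rewrite (@Sq_form _ _ _ dap) sum_gamc_split' -(@Sq_form d r r d0') -(dot_gamc r r).
have T2qr : dot (q *m Sq (fun l => a - d l)) (r *m Sq (fun l => a - d l)) = - be.
  by rewrite (@Sq_form _ _ _ dap) sum_gamc_split' qrs mulr0 sub0r -(@Sq_form d q r d0').
have CS1 := CS (q *m Sq (fun l => d l - b)) (r *m Sq (fun l => d l - b)).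
have CS2 := CS (q *m Sq (fun l => a - d l)) (r *m Sq (fun l => a - d l)).
have P1 := dot_ge0 (q *m Sq (fun l => d l - b)).
have P2 := dot_ge0 (r *m Sq (fun l => d l - b)).
have P3 := dot_ge0 (q *m Sq (fun l => a - d l)).
have P4 := dot_ge0 (r *m Sq (fun l => a - d l)).
rewrite T1qq T1rr T1qr in CS1 P1 P2.
rewrite T2qq T2rr T2qr normrN in CS2 P3 P4.
have yS : dot (y *m Sq d) (y *m Sq d) = al + ga + (2%:R * complex.Re be)%:C%C.
  rewrite yqr mulmxDl dotDl !dotDr -/al -/ga -/be -addJ.
  by rewrite (dotC (q *m Sq d)) -/be [Num.conj be + ga]addrC addrACA.
rewrite yS -/q -/al.
move: CS1 CS2 P1 P2 P3 P4.
rewrite ealr egar enqr enrr -add_Re2_Im2.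
rewrite -!rmorphM -!rmorphB -!rmorphD -!rmorphM /= !lecR.
move=> CS1 CS2 P1 P2 P3 P4.
rewrite !subr_ge0 in P1 P2 P3 P4.
have nq0 : 0 <= complex.Re nq by rewrite -lecR -enqr dot_ge0.
have nr0 : 0 <= complex.Re nr by rewrite -lecR -enrr dot_ge0.
exact: (wiel_finish b0 ba nq0 nr0 P1 P3 P2 P4 CS1 CS2).
Qed.
End Main.
End S.

Section G.
Variable R : rcfType.
Local Notation C := (R[i]).

Lemma dot_mxl n (x z : 'rV[C]_n) (M : 'M[C]_n) : dot (x *m M) z = dot x (z *m adjmx M).
Proof. by rewrite /dot adjmxM adjmxK mulmxA. Qed.

Lemma bessel n (I : finType) (K : pred I) (u : I -> 'rV[C]_n) (h : 'rV[C]_n) :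
  (forall i j, K i -> K j -> i != j -> dot (u i) (u j) = 0) ->
  (forall i, K i -> dot (u i) (u i) <= 1) ->
  \sum_(i | K i) dot h (u i) * Num.conj (dot h (u i)) <= dot h h.
Proof.
move=> uo u1; set g := fun i => dot h (u i).
set s := \sum_(i | K i) g i *: u i.
set G := \sum_(i | K i) g i * Num.conj (g i).
have hs : dot h s = G.
  rewrite /s dot_sumr; apply: eq_bigr => i _; by rewrite dotZr mulrC.
have sh : dot s h = G.
  rewrite /s dot_suml; apply: eq_bigr => i _; by rewrite dotZl -dotC.
have ss : dot s s = \sum_(i | K i) g i * Num.conj (g i) * dot (u i) (u i).
  rewrite /s dot_suml; apply: eq_bigr => i Ki.
  rewrite dotZl dot_sumr (bigD1 i) //= big1 ?addr0.
    by rewrite dotZr mulrA.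
  by move=> j /andP [Kj ji]; rewrite dotZr uo ?mulr0 // eq_sym.
have ssG : dot s s <= G.
  rewrite ss; apply: ler_sum => i Ki; apply: ler_piMr; first exact: mulJ_ge0.
  exact: u1.
have := dot_ge0 (h - s).
rewrite dotBl !dotBr hs sh => H.
move: H; rewrite -/G => H.
rewrite -subr_ge0; apply: le_trans H _.
by rewrite lerBlDr lerDl subr_ge0.
Qed.
Lemma pyth n (I : finType) (K : pred I) (v : I -> 'rV[C]_n) (g : I -> C) :
  (forall i j, dot (v i) (v j) = (i == j)%:R) ->
  dot (\sum_(i | K i) g i *: v i) (\sum_(i | K i) g i *: v i) = \sum_(i | K i) g i * Num.conj (g i).
Proof.
move=> vo; rewrite dot_suml; apply: eq_bigr => i Ki.
rewrite dotZl dot_sumr (bigD1 i) //= big1 ?addr0.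
  by rewrite dotZr vo eqxx mulr1 mulrC.
by move=> j /andP [Kj ji]; rewrite dotZr vo eq_sym (negbTE ji) mulr0.
Qed.

Section Bounds.
Variables (n : nat) (e p : 'I_n -> 'rV[C]_n) (a b c : R) (d : 'I_n -> R).
Hypotheses (oe : orthon e) (ce : complete e) (op : orthon p) (cp : complete p).
Hypotheses (b0 : 0 < b) (ba : b <= a) (db : forall l, b <= d l) (da : forall l, d l <= a).
Hypotheses (c0 : 0 <= c) (hc : (a + b) ^+ 2 = 4%:R * a * b * c ^+ 2).
Variables (K : pred 'I_n) (u v : 'I_n -> 'rV[C]_n).
Hypotheses (uo : forall i j, K i -> K j -> i != j -> dot (u i) (u j) = 0).
Hypotheses (u1 : forall i, K i -> dot (u i) (u i) <= 1).
Hypotheses (vo : forall i j, dot (v i) (v j) = (i == j)%:R).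

Local Notation S := (Sq e d).
Local Notation Si := (Sq e (fun l => (d l)^-1)).

Lemma d0' l : 0 < d l. Proof. exact: lt_le_trans b0 (db l). Qed.

Lemma SiS : Si *m S = 1%:M.
Proof.
rewrite Sq_mul // -(Dm1 ce) /Dm; apply: eq_bigr => l _.
rewrite -sqrtrM ?invr_ge0 ?ltW ?d0' // mulVf ?sqrtr1 //.
by rewrite gt_eqF ?d0'.
Qed.

Lemma normle (z X : C) : `|z| ^+ 2 <= X ->
  (4%:R * a * b)%:C%C * X <= ((a + b) ^+ 2)%:C%C -> `|z| <= c%:C%C.
Proof.
move=> zX hX.
have ab0 : 0 < 4%:R * a * b.
  apply: mulr_gt0; last done; apply: mulr_gt0; first by [].
  exact: lt_le_trans b0 ba.
have Xc : X <= (c ^+ 2)%:C%C.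
  rewrite -(@ler_pM2l _ (4%:R * a * b)%:C%C) ?ltcR // -rmorphM /= -hc //.
rewrite -(@ler_pXn2r _ 2) // ?nnegrE ?normr_ge0 ?lecR //.
by apply: le_trans zX _; rewrite -rmorphXn.
Qed.

Definition T (P : pred 'I_n) :=
  \sum_(i | K i) dot (u i *m Si *m Dm p (fun j => (P j)%:R) *m S) (v i).

Lemma TboundB P : `|T P| <= \sum_(i | K i) c%:C%C.
Proof.
apply: le_trans (ler_norm_sum _ _ _) _; apply: ler_sum => i Ki.
set y := u i *m Si.
apply: (normle (X := dot (y *m Dm p (fun j => (P j)%:R) *m S) (y *m Dm p (fun j => (P j)%:R) *m S))).
  by have := CS (y *m Dm p (fun j => (P j)%:R) *m S) (v i); rewrite vo eqxx mulr1.
apply: le_trans (WC oe ce b0 ba db da P y op cp) _.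
rewrite /y -mulmxA SiS mulmx1.
by rewrite ler_piMr ?u1 // lecR sqr_ge0.
Qed.
Lemma Tsplit P : T P =
  \sum_(j | P j) \sum_(i | K i) dot (u i) (p j *m Si) * dot (p j *m S) (v i).
Proof.
rewrite /T.
under eq_bigr => i Ki do rewrite rv_Dm mulmx_suml dot_suml.
rewrite exchange_big /= [in RHS]big_mkcond /=; apply: eq_bigr => j _.
case: (P j); last by rewrite big1 // => i _; rewrite -scalemxAl dotZl !mul0r.
apply: eq_bigr => i _; rewrite -scalemxAl dotZl mul1r dot_mxl Sq_adj.
done.
Qed.

Lemma inner_bound j :
  `|\sum_(i | K i) dot (u i) (p j *m Si) * dot (p j *m S) (v i)| <= c%:C%C.
Proof.
set h := p j *m Si; set g := p j *m S.
set w := \sum_(i | K i) dot h (u i) *: v i.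
have -> : \sum_(i | K i) dot (u i) h * dot g (v i) = dot g w.
  by rewrite /w dot_sumr; apply: eq_bigr => i _; rewrite dotZr -dotC mulrC.
apply: (normle (X := dot g g * dot h h)).
  apply: le_trans (CS g w) _; apply: ler_wpM2l; first exact: dot_ge0.
  by rewrite /w pyth //; apply: bessel.
have pp : dot (p j) (p j) = 1 by rewrite op eqxx.
exact: (KC oe ce b0 ba db da pp).
Qed.

Lemma TboundA P : `|T P| <= \sum_(j | P j) c%:C%C.
Proof.
rewrite Tsplit; apply: le_trans (ler_norm_sum _ _ _) _; apply: ler_sum => j _.
exact: inner_bound.
Qed.
End Bounds.
End G.

Lemma tele (V : zmodType) (f : nat -> V) n j : (j <= n)%N ->
  \sum_(m < n | (j <= m)%N) (f m - f m.+1) = f j - f n.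
Proof.
elim: n => [|n IH] jn.
  by rewrite big_ord0; move: jn; rewrite leqn0 => /eqP ->; rewrite subrr.
rewrite big_mkcond big_ord_recr /= -big_mkcond /=.
have [jn1|jn1] := leqP j n.
  by rewrite IH // addrA subrK.
have -> : j = n.+1 by apply/eqP; rewrite eqn_leq jn.
rewrite big1 ?addr0 ?subrr // => m.
by rewrite leqNgt ltnS (ltnW (ltn_ord m)).
Qed.

Lemma abel (K0 : pzRingType) (V : lmodType K0) n (lam : nat -> K0) (E : 'I_n -> V) :
  lam n = 0 ->
  \sum_(j < n) lam j *: E j = \sum_(m < n) (lam m - lam m.+1) *: \sum_(j < n | (j <= m)%N) E j.
Proof.
move=> ln.
under [RHS]eq_bigr => m _ do rewrite scaler_sumr.
rewrite (exchange_big_dep xpredT) //=; apply: eq_bigr => j _.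
rewrite -scaler_suml tele ?ln ?subr0 //; exact: ltnW.
Qed.

Lemma count_lt (K0 : pzSemiRingType) n t : (t <= n)%N ->
  \sum_(j < n | (j < t)%N) (1 : K0) = t%:R.
Proof. by move=> tn; rewrite -(big_ord_widen _ (fun _ => 1)) // sumr_const card_ord. Qed.

Lemma rv_decomp (R : rcfType) n (H : 'M[R[i]]_n) w (f : 'I_n -> 'rV[R[i]]_n) j :
  orthon f -> decomp H w f -> f j *m H = (w j)%:C%C *: f j.
Proof.
move=> fo ->; rewrite (rv_Dm f (fun i => (w i)%:C%C)) (bigD1 j) //= fo eqxx mulr1 big1 ?addr0 //.
by move=> i ij; rewrite fo eq_sym (negbTE ij) mulr0 scale0r.
Qed.

Lemma eig_rv (R : rcfType) n (H : 'M[R[i]]_n) (x : 'rV[R[i]]_n) c :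
  x *m H = c *: x -> dot x x = 1 -> eigenvalue H c.
Proof.
move=> xH xx; apply/eigenvalueP; exists x => //.
by apply: contraTneq isT => x0; move: xx; rewrite x0 dot0l => /eqP; rewrite eq_sym oner_eq0.
Qed.

Lemma abelR (K0 : comPzRingType) n (lam : nat -> K0) (E : 'I_n -> K0) :
  lam n = 0 ->
  \sum_(j < n) lam j * E j = \sum_(m < n) (lam m - lam m.+1) * \sum_(j < n | (j <= m)%N) E j.
Proof.
move=> ln.
under [RHS]eq_bigr => m _ do rewrite mulr_sumr.
rewrite (exchange_big_dep xpredT) //=; apply: eq_bigr => j _.
rewrite -mulr_suml tele ?ln ?subr0 //; exact: ltnW.
Qed.

Lemma ReM (R : rcfType) (r : R) (z : R[i]) : complex.Re (r%:C%C * z) = r * complex.Re z.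
Proof. by case: z => x y /=; ring. Qed.

Lemma Re_le (R : rcfType) (z : R[i]) (r : R) : `|z| <= r%:C%C -> complex.Re z <= r.
Proof.
move=> h; rewrite -lecR; apply: le_trans h.
apply: le_trans (normc_ge_Re z); rewrite lecR; exact: ler_norm.
Qed.

Local Open Scope complex_scope.
Unset Implicit Arguments.

Theorem corollary1p3 (R : rcfType) (n : nat) (A Z : 'M[R[i]]_n) (a b : R)
    (sig lam : seq R) :
  psdmx A -> pdmx Z ->
  eigenvalue Z (a%:C) -> eigenvalue Z (b%:C) ->
  (forall c : R[i], eigenvalue Z c -> (b%:C <= c) && (c <= a%:C)) ->
  is_Sing (A *m Z) sig -> is_Eig (A *m Z) lam ->
  forall k : nat, (k <= n)%N ->
    \sum_(i < k) sig`_i <= (a + b) / (2 * Num.sqrt (a * b)) * \sum_(i < k) lam`_i.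
Proof.
move=> [hA hA2] [hZ hZ2] ea eb hab [ss [sg0 scp]] [ls lcp] k kn.
have [e [d [oe ce Zd]]] := spec_any hZ.
have Zr : forall l, e l *m Z = (d l)%:C *: e l by move=> l; exact: rv_decomp.
have ee : forall l, dot (e l) (e l) = 1 by move=> l; rewrite oe eqxx.
have dab : forall l, b <= d l /\ d l <= a.
  move=> l; have /andP [h1 h2] := hab _ (eig_rv (Zr l) (ee l)).
  by rewrite !lecR in h1 h2.
have db : forall l, b <= d l by move=> l; case: (dab l).
have da : forall l, d l <= a by move=> l; case: (dab l).
have b0 : 0 < b.
  move/eigenvalueP: eb => [v vZ v0].
  have := hZ2 v v0; rewrite vZ -scalemxAl mxE -/(dot v v).
  by rewrite pmulr_lgt0 ?dot_gt0 // ltcR.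
have ba : b <= a by have /andP [h _] := hab _ ea; rewrite lecR in h.
have Zd' : Z = Dm e (fun l => (d l)%:C) := Zd.
set S := Sq e d; set Si := Sq e (fun l => (d l)^-1).
have hSiS : Si *m S = 1%:M := SiS oe ce b0 db.
have SS : S *m S = Z.
  rewrite Sq_mul // Zd' /Dm; apply: eq_bigr => l _.
  by rewrite -expr2 sqr_sqrtr // ltW // (lt_le_trans b0 (db l)).
set P := S *m A *m S.
have hP : adjmx P = P by rewrite /P !adjmxM Sq_adj hA mulmxA.
have MZ : A *m Z = Si *m P *m S by rewrite /P -SS !mulmxA hSiS mul1mx.
have cP : char_poly P = \prod_(x <- lam) ('X - (x%:C)%:P) by rewrite -lcp MZ char_poly_conj.
have [szl [p [op cp Pd]]] := spec_sorted hP cP.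
have Pr : forall j, p j *m P = (lam`_j)%:C *: p j.
  by move=> j; exact: (@rv_decomp _ _ P (fun i => lam`_i) p j op Pd).
have lam0 : forall j : 'I_n, 0 <= lam`_j.
  move=> j; have := hA2 (p j *m S).
  have -> : p j *m S *m A *m adjmx (p j *m S) = p j *m P *m adjmx (p j).
    by rewrite adjmxM Sq_adj /P !mulmxA.
  by rewrite Pr -scalemxAl mxE -/(dot (p j) (p j)) op eqxx mulr1 lecR.
set M := A *m Z; set H := adjmx M *m M.
have hH : adjmx H = H by rewrite /H adjmxM adjmxK.
have cH : char_poly H = \prod_(y <- [seq z ^+ 2 | z <- sig]) ('X - (y%:C)%:P).
  by rewrite big_map.
have [szs [x [ox cx Hd]]] := spec_sorted hH cH.
rewrite size_map in szs.
have Hr : forall i, x i *m H = ((sig`_i) ^+ 2)%:C *: x i.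
  move=> i; rewrite (@rv_decomp _ _ H (fun i => [seq z ^+ 2 | z <- sig]`_i) x i ox Hd).
  by rewrite (nth_map 0) // szs.
have sig0 : forall i : 'I_n, 0 <= sig`_i.
  by move=> i; apply: (allP sg0); rewrite mem_nth // szs.
pose u := fun i : 'I_n => if sig`_i == 0 then 0 else ((sig`_i)^-1)%:C *: (x i *m adjmx M).
have xMM : forall i j, dot (x i *m adjmx M) (x j *m adjmx M) = ((sig`_j) ^+ 2)%:C * (i == j)%:R.
  by move=> i j; rewrite dot_mxl adjmxK -mulmxA -/H Hr dotZr conjR ox.
have uo : forall i j, i != j -> dot (u i) (u j) = 0.
  move=> i j ij; rewrite /u; case: eqP => _; rewrite ?dot0l //; case: eqP => _; rewrite ?dot0r //.
  by rewrite dotZl dotZr xMM (negbTE ij) !mulr0.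
have u1 : forall i, dot (u i) (u i) <= 1.
  move=> i; rewrite /u; case: eqP => s0; first by rewrite dot0l ler01.
  rewrite dotZl dotZr xMM eqxx mulr1 conjR -!rmorphM /=.
  have -> : (sig`_i)^-1 * ((sig`_i)^-1 * sig`_i ^+ 2) = 1 by field; apply/eqP.
  by rewrite rmorph1.
have uM : forall i, dot (u i *m M) (x i) = (sig`_i)%:C.
  move=> i; rewrite /u; case: eqP => s0; first by rewrite mul0mx dot0l s0 rmorph0.
  rewrite -scalemxAl dotZl -mulmxA -/H Hr dotZl ox eqxx mulr1 -rmorphM /=.
  by congr (_%:C); field; apply/eqP.
set K := fun i : 'I_n => (i < k)%N.
set coef := fun m : nat => lam`_m - lam`_m.+1.
have lamn : lam`_n = 0 by rewrite nth_default // szl.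
have PA : P = \sum_(m < n) (coef m)%:C *: Dm p (fun j => ((j <= m)%N)%:R).
  have Pd' : P = \sum_(j < n) (lam`_j)%:C *: (adjmx (p j) *m p j) := Pd.
  rewrite {1}Pd' (@abel _ _ n (fun m => (lam`_m)%:C) (fun j => adjmx (p j) *m p j)); last first.
    by rewrite /= lamn rmorph0.
  apply: eq_bigr => m _; rewrite /coef rmorphB; congr (_ *: _).
  rewrite /Dm big_mkcond; apply: eq_bigr => j _.
  by case: (j <= m)%N; rewrite ?scale1r ?scale0r.
have key : forall i0, dot (u i0 *m M) (x i0) = \sum_(m < n) (coef m)%:C *
     dot (u i0 *m Si *m Dm p (fun j => ((j <= m)%N)%:R) *m S) (x i0).
  move=> i0; rewrite /M MZ mulmxA [u i0 *m (Si *m P)]mulmxA PA.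
  rewrite (mulmx_sumr (u i0 *m Si)) (mulmx_suml S) dot_suml.
  by apply: eq_bigr => m _; rewrite -scalemxAr -scalemxAl dotZl.
have E1 : (\sum_(i < n | K i) sig`_i)%:C =
    \sum_(m < n) (coef m)%:C * T e p d K u x (fun j : 'I_n => (j <= m)%N).
  rewrite rmorph_sum /=.
  under eq_bigr => i0 _ do rewrite -uM key.
  rewrite exchange_big /=; apply: eq_bigr => m _; rewrite /T mulr_sumr.
  done.
have E2 : \sum_(i < n | K i) sig`_i =
    \sum_(m < n) coef m * complex.Re (T e p d K u x (fun j : 'I_n => (j <= m)%N)).
  move/(congr1 (@complex.Re R)): E1; rewrite /= raddf_sum /= => ->.
  by apply: eq_bigr => m _; rewrite ReM.
set c := (a + b) / (2 * Num.sqrt (a * b)).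
have ab0 : 0 < a * b by apply: mulr_gt0 => //; apply: lt_le_trans b0 ba.
have sq0 : 0 < Num.sqrt (a * b) by rewrite sqrtr_gt0.
have c0 : 0 <= c.
  apply: divr_ge0; first lra.
  by apply: mulr_ge0; [|exact: ltW].
have hc : (a + b) ^+ 2 = 4%:R * a * b * c ^+ 2.
  rewrite /c expr_div_n exprMn sqr_sqrtr ?ltW //; field.
  by rewrite !gt_eqF //; apply: lt_le_trans b0 ba.
have uo' : forall i j, K i -> K j -> i != j -> dot (u i) (u j) = 0 by move=> i j _ _; exact: uo.
have u1' : forall i, K i -> dot (u i) (u i) <= 1 by move=> i _; exact: u1.
have cnt : forall t, (t <= n)%N -> \sum_(j < n | (j < t)%N) c%:C = (c * t%:R)%:C.
  move=> t tn.
  have -> : \sum_(j < n | (j < t)%N) c%:C = c%:C * \sum_(j < n | (j < t)%N) 1.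
    by rewrite mulr_sumr; apply: eq_bigr => j _; rewrite mulr1.
  rewrite count_lt //.
  by rewrite [RHS]rmorphM rmorph_nat.
have Tb : forall m : 'I_n,
    complex.Re (T e p d K u x (fun j : 'I_n => (j <= m)%N)) <= c * (minn m.+1 k)%:R.
  move=> m; apply: Re_le.
  have hA' := TboundA oe ce op b0 ba db da c0 hc uo' u1' ox (fun j : 'I_n => (j <= m)%N).
  have hB' := TboundB oe ce op cp b0 ba db da c0 hc u1' ox (fun j : 'I_n => (j <= m)%N).
  have eA : \sum_(j < n | (j <= m)%N) c%:C = (c * m.+1%:R)%:C.
    by rewrite -cnt ?ltn_ord //.
  have eB : \sum_(j < n | K j) c%:C = (c * k%:R)%:C by rewrite cnt.
  rewrite eA in hA'; rewrite eB in hB'.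
  by case: (leqP m.+1 k).
have cf : forall m : 'I_n, 0 <= coef m.
  move=> m; rewrite /coef subr_ge0.
  have [mn|mn] := ltnP m.+1 n.
    by move/sortedP: ls => /(_ 0 m); rewrite szl => /(_ mn).
  by rewrite nth_default ?szl // lam0.
have lamE : \sum_(i < n | K i) lam`_i = \sum_(m < n) coef m * (minn m.+1 k)%:R.
  have := @abelR R n (fun m => lam`_m) (fun j : 'I_n => ((j < k)%N)%:R) lamn.
  have -> : \sum_(j < n) lam`_j * ((j < k)%N)%:R = \sum_(i < n | K i) lam`_i.
    by rewrite [RHS]big_mkcond; apply: eq_bigr => j _; rewrite /K; case: (j < k)%N; rewrite ?mulr1 ?mulr0.
  move=> ->; apply: eq_bigr => m _; congr (_ * _).
  rewrite (eq_bigr (fun j : 'I_n => if (j < k)%N then 1 else 0)); last by move=> j _; case: (j < k)%N.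
  rewrite -big_mkcondr /=.
  rewrite (eq_bigl (fun j : 'I_n => (j < minn m.+1 k)%N)); last by move=> j; rewrite /= leq_min ltnS.
  by rewrite count_lt // (leq_trans (geq_minl _ _)) // ltn_ord.
rewrite !(big_ord_widen n _ kn) -/K E2 lamE mulr_sumr.
apply: ler_sum => m _; rewrite mulrCA; apply: ler_wpM2l; first exact: cf.
exact: Tb.
Qed.
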